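(* Let $\Omega>0$, let $V_0,V_1$ be column indices of $X\in\mathbb{R}^{K\times d}$ with $X[i,V_0],X[i,V_1]\in[-\Omega,\Omega]$ for all $i\in[K]$, let $C$ be a column index with $X[i,C]\in\{0,1\}$ for all $i\in[K]$, and let $E$ be a target column index. Then there exists a single transformer layer that simulates the selection operation: for every $i\in[K]$, it writes $X[i,V_1]$ into entry $(i,E)$ if $X[i,C]=1$, and writes $X[i,V_0]$ into entry $(i,E)$ otherwise.
   Context: Conventions: rows/columns indexed from $1$; $X[i,j]$ is the $(i,j)$ entry. $\phi(x)=\max\{x,0\}$ entrywise. Hardmax $\sigma$: row $i$ of $\sigma(\Phi)$ is $\frac{1}{|S_i|}\sum_{k\in S_i}e_k$, $S_i=\{k:\Phi_{ik}=\max_j\Phi_{ij}\}$. For a weighted hypergraph with incident matrix $A\in\mathbb{R}^{n_v\times n_e}$ ($A_{ij}=w(e_j)$ if vertex $v_i$ lies in hyperedge $e_j$, else $0$) and $K\ge\max\{n_v,n_e\}+1$, the padded incident matrix $\widetilde A\in\mathbb{R}^{K\times K}$ has $\widetilde A_{i+1,j+1}=A_{ij}$ and zeros elsewhere. A transformer layer acting on $X\in\mathbb{R}^{K\times d}$ is $f(X,\widetilde A)=f_{\mathrm{mlp}}(f_{\mathrm{attn}}(X,\widetilde A))$, where $f_{\mathrm{attn}}(X,\widetilde A)=\sum_{i\in M_A}\psi^{(i)}(X,\widetilde A)+\sum_{i\in M_{A^\top}}\psi^{(i)}(X,\widetilde A^\top)+\sum_{i\in M}\psi^{(i)}(X,I_K)+X$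 with heads $\psi(X,B)=B\,\sigma(XW_QW_K^\top X^\top)XW_V$ ($W_Q,W_K\in\mathbb{R}^{d\times2}$, $W_V\in\mathbb{R}^{d\times d}$), and $f_{\mathrm{mlp}}(X)=Z^{(4)}W^{(4)}+X$ with $Z^{(1)}=X$, $Z^{(j+1)}=\phi(Z^{(j)}W^{(j)})$ for $j=1,2,3$, $W^{(j)}\in\mathbb{R}^{d\times d}$. Storage convention: scalars are stored in the top row of a column (other entries $0$), arrays of length $K-1$ in rows $2,\dots,K$ (top entry $0$); $X$ contains designated columns $B_{\mathrm{global}}$ (top entry $1$, others $0$), $B_{\mathrm{local}}$ (top entry $0$, others $1$), and may contain scratchpad columns. ''Simulating an operation'' means the layer's weights can be chosen so that applying the layer to $X$ performs the stated update. *)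

(* Defs.v *)
From mathcomp Require Import all_boot all_order all_algebra.
Set Implicit Arguments. Unset Strict Implicit. Unset Printing Implicit Defensive.
Import Order.TTheory GRing.Theory Num.Theory.
Local Open Scope ring_scope.

Section Transformer.
Variable R : realFieldType.

Definition relu_mx m n (Z : 'M[R]_(m, n)) : 'M[R]_(m, n) :=
  map_mx (fun x => Num.max x 0) Z.

Definition rowmax K (Phi : 'M[R]_K) (i : 'I_K) : R :=
  \big[Num.max/Phi i i]_(j < K) Phi i j.

Definition argmax_set K (Phi : 'M[R]_K) (i : 'I_K) : {set 'I_K} :=
  [set k | Phi i k == rowmax Phi i].

Definition hardmax K (Phi : 'M[R]_K) : 'M[R]_K :=
  \matrix_(i, k) ((k \in argmax_set Phi i)%:R / (#|argmax_set Phi i|)%:R).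

Record head (d : nat) := Head {
  WQ : 'M[R]_(d, 2);
  WK : 'M[R]_(d, 2);
  WV : 'M[R]_(d, d) }.

Definition psi K d (h : head d) (X : 'M[R]_(K, d)) (B : 'M[R]_K) : 'M[R]_(K, d) :=
  B *m hardmax (X *m WQ h *m (WK h)^T *m X^T) *m X *m WV h.

Record layer (d : nat) := Layer {
  headsA  : seq (head d);
  headsAT : seq (head d);
  headsI  : seq (head d);
  W1 : 'M[R]_d; W2 : 'M[R]_d; W3 : 'M[R]_d; W4 : 'M[R]_d }.

Definition f_attn K d (L : layer d) (X : 'M[R]_(K, d)) (At : 'M[R]_K) : 'M[R]_(K, d) :=
  \sum_(h <- headsA L) psi h X At
  + \sum_(h <- headsAT L) psi h X At^T
  + \sum_(h <- headsI L) psi h X 1%:M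
  + X.

Definition f_mlp K d (L : layer d) (X : 'M[R]_(K, d)) : 'M[R]_(K, d) :=
  let Z2 := relu_mx (X *m W1 L) in
  let Z3 := relu_mx (Z2 *m W2 L) in
  let Z4 := relu_mx (Z3 *m W3 L) in
  Z4 *m W4 L + X.

Definition apply_layer K d (L : layer d) (X : 'M[R]_(K, d)) (At : 'M[R]_K) : 'M[R]_(K, d) :=
  f_mlp L (f_attn L X At).

(* incidence matrix of a weighted hypergraph with n_v vertices and n_e
   hyperedges: inc i j says vertex v_i lies in hyperedge e_j, w j = w(e_j) *)
Definition incidence nv ne (inc : 'I_nv -> 'I_ne -> bool) (w : 'I_ne -> R)
  : 'M[R]_(nv, ne) := \matrix_(i, j) (if inc i j then w j else 0).

(* padded incidence matrix: Atilde_{i+1,j+1} = A_{ij} (1-indexed), 0 elsewhere;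
   in 0-indexed ordinals: Atilde i j = A (i-1) (j-1) for 1 <= i <= nv, 1 <= j <= ne *)
Definition padded K nv ne (A : 'M[R]_(nv, ne)) : 'M[R]_K :=
  \matrix_(i, j)
    match (insub (i.-1) : option 'I_nv), (insub (j.-1) : option 'I_ne) with
    | Some i', Some j' => if (0 < i)%N && (0 < j)%N then A i' j' else 0
    | _, _ => 0
    end.

(* designated columns: B_global has top entry 1 and all others 0;
   B_local has top entry 0 and all others 1 (top row = row 1 = index 0) *)
Definition is_Bglobal K d (X : 'M[R]_(K, d)) (c : 'I_d) : Prop :=
  forall i : 'I_K, X i c = (nat_of_ord i == 0)%N%:R.
Definition is_Blocal K d (X : 'M[R]_(K, d)) (c : 'I_d) : Prop :=
  forall i : 'I_K, X i c = (nat_of_ord i != 0)%N%:R.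

End Transformer.

(* Main.v *)
Require Import Defs.
From mathcomp Require Import all_boot all_order all_algebra.
From mathcomp Require Import ring lra.
Import Order.TTheory GRing.Theory Num.Theory.
Local Open Scope ring_scope.

Set Implicit Arguments.
Section Aux.
Variable R : realFieldType.

Lemma S1 n (x f g : 'I_n -> R) :
  \sum_k x k * (f k + g k) = \sum_k x k * f k + \sum_k x k * g k.
Proof. by rewrite -big_split; apply: eq_bigr => k _; rewrite mulrDr. Qed.
Lemma S2 n (x f g : 'I_n -> R) :
  \sum_k x k * (f k - g k) = \sum_k x k * f k - \sum_k x k * g k.
Proof. by rewrite -sumrB; apply: eq_bigr => k _; rewrite mulrBr. Qed.
Lemma S5 n (x f : 'I_n -> R) :
  \sum_k x k * (- f k) = - \sum_k x k * f k.
Proof. by rewrite -sumrN; apply: eq_bigr => k _; rewrite mulrN. Qed.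
Lemma S3 n (x f : 'I_n -> R) a :
  \sum_k x k * (a * f k) = a * \sum_k x k * f k.
Proof. by rewrite mulr_sumr; apply: eq_bigr => k _; rewrite mulrCA. Qed.
Lemma S4 n (x : 'I_n -> R) c :
  \sum_k x k * (k == c)%:R = x c.
Proof.
rewrite (bigD1 c) //= eqxx mulr1 big1 ?addr0 // => k /negbTE ->.
by rewrite mulr0.
Qed.


Lemma relu_split (x : R) : Num.max x 0 - Num.max (- x) 0 = x.
Proof.
have [hx|hx] := boolP (0 <= x).
  have -> : Num.max x 0 = x by apply/max_idPl.
  have -> : Num.max (-x) 0 = 0 by apply/max_idPr; lra.
  by rewrite subr0.
have -> : Num.max x 0 = 0 by apply/max_idPr; lra.
have -> : Num.max (-x) 0 = -x by apply/max_idPl; lra.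
by rewrite sub0r opprK.
Qed.

Lemma attn0 K d (W1 W2 W3 W4 : 'M[R]_d) (X : 'M[R]_(K, d)) At :
  f_attn (Layer [::] [::] [::] W1 W2 W3 W4) X At = X.
Proof. by rewrite /f_attn /= !big_nil !add0r. Qed.

Lemma relu_id m n (Z : 'M[R]_(m, n)) :
  (forall i j, 0 <= Z i j) -> relu_mx Z = Z.
Proof.
by move=> h; apply/matrixP => i j; rewrite /relu_mx mxE; apply/max_idPl.
Qed.

Lemma reluE m n (Z : 'M[R]_(m, n)) i j : relu_mx Z i j = Num.max (Z i j) 0.
Proof. by rewrite mxE. Qed.
End Aux.
Arguments S1 {R n} x f g.
Arguments S2 {R n} x f g.
Arguments S3 {R n} x f a.
Arguments S4 {R n} x c.
Arguments S5 {R n} x f.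
Arguments relu_id {R m n Z}.

Lemma ord2_cases (a b c : 'I_2) : a != b -> c = a \/ c = b.
Proof.
by case: a b c => [[|[|?]] ?] [[|[|?]] ?] [[|[|?]] ?] //= _;
  (left + right); apply/val_inj.
Qed.

Theorem lemmaC1 (R : realFieldType) (d : nat) (Omega : R)
    (V0 V1 C E Bg Bl : 'I_d) :
  0 < Omega ->
  exists L : layer R d,
  forall (K : nat) (X : 'M[R]_(K, d)),
    is_Bglobal X Bg -> is_Blocal X Bl ->
    (forall i : 'I_K, - Omega <= X i V0 <= Omega) ->
    (forall i : 'I_K, - Omega <= X i V1 <= Omega) ->
    (forall i : 'I_K, X i C = 0 \/ X i C = 1) ->
    forall (nv ne : nat) (inc : 'I_nv -> 'I_ne -> bool) (w : 'I_ne -> R),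
    (maxn nv ne < K)%N ->
    forall (i : 'I_K) (j : 'I_d),
      apply_layer L X (padded K (incidence inc w)) i j =
      (if j == E then (if X i C == 1 then X i V1 else X i V0) else X i j).
Proof.
move=> hO.
case: d V0 V1 C E Bg Bl => [|[|[|d']]] V0 V1 C E Bg Bl.
- by case: V0.
- exists (Layer [::] [::] [::] 0 0 0 0).
  move=> K X hg hl _ _ _ nv ne inc w hK i j.
  have eBB : Bg = Bl by rewrite [Bg]ord1 [Bl]ord1.
  move: (hg i) (hl i); rewrite eBB => ->.
  by case: (nat_of_ord i == 0)%N => /eqP; rewrite ?oner_eq0 // eq_sym oner_eq0.
- pose gv (k : 'I_2) : R := (if (C == k)%:R == (1:R) then (V1 == k)%:R else (V0 == k)%:R)
     - (E == k)%:R.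
  pose W4 : 'M[R]_2 := \matrix_(k, m) ((m == E)%:R * gv k).
  exists (Layer [::] [::] [::] 1%:M 1%:M 1%:M W4).
  move=> K X hg hl _ _ _ nv ne inc w hK i j.
  have [eBB|nBB] := eqVneq Bg Bl.
    move: (hg i) (hl i); rewrite eBB => ->.
    by case: (nat_of_ord i == 0)%N => /eqP; rewrite ?oner_eq0 // eq_sym oner_eq0.
  have cs : forall c : 'I_2, c = Bg \/ c = Bl.
    by move=> c; apply: ord2_cases.
  pose t (i : 'I_K) := if (nat_of_ord i == 0)%N then Bg else Bl.
  have hX : forall i c, X i c = (c == t i)%:R.
    move=> i' c; rewrite /t; case: (cs c) => ->.
      by rewrite hg; case: (nat_of_ord i' == 0)%N; rewrite ?eqxx // (negbTE nBB).
    by rewrite hl; case: (nat_of_ord i' == 0)%N; rewrite ?eqxx // eq_sym (negbTE nBB).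
  have Xpos : forall i c, 0 <= X i c by move=> i' c; rewrite hX ler0n.
  rewrite /apply_layer attn0 /f_mlp /= !mulmx1 !(relu_id Xpos).
  rewrite [(_ *m W4 + X) i j]mxE [(_ *m W4) i j]mxE.
  under eq_bigr => k _ do rewrite [W4 k j]mxE.
  rewrite S3 (bigD1 (t i)) //= big1 ?addr0; last first.
    by move=> k hk; rewrite hX (negbTE hk) mul0r.
  rewrite hX eqxx mul1r.
  case: eqP => [->|_]; last by rewrite mul0r add0r.
  rewrite mul1r /gv !hX.
  by rewrite subrK.
set n0 : 'I_d'.+3 := Ordinal (isT : (0 < d'.+3)%N).
set n1 : 'I_d'.+3 := Ordinal (isT : (1 < d'.+3)%N).
set n2 : 'I_d'.+3 := Ordinal (isT : (2 < d'.+3)%N).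
pose a0 (k : 'I_d'.+3) : R := (k == V1)%:R - (k == V0)%:R + (4 * Omega) * (k == C)%:R
   - (2 * Omega) * ((k == Bg)%:R + (k == Bl)%:R).
pose aL (k : 'I_d'.+3) : R := (k == V0)%:R - (2 * Omega) * (k == C)%:R - (k == E)%:R.
pose W1 : 'M[R]_d'.+3 := \matrix_(k, m)
   ((m == n0)%:R * a0 k + (m == n1)%:R * aL k - (m == n2)%:R * aL k).
pose W4 : 'M[R]_d'.+3 := \matrix_(k, m)
   ((m == E)%:R * ((k == n0)%:R + (k == n1)%:R - (k == n2)%:R)).
exists (Layer [::] [::] [::] W1 1%:M 1%:M W4).
move=> K X hg hl hV0 hV1 hC nv ne inc w hK i j.
rewrite /apply_layer attn0 /f_mlp /= !mulmx1.
have Z2pos : forall i j, 0 <= relu_mx (X *m W1) i j.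
  by move=> i' j'; rewrite mxE le_max lexx orbT.
rewrite !(relu_id Z2pos).
have e1 : X i Bg + X i Bl = 1.
  by rewrite hg hl; case: (nat_of_ord i == 0)%N; rewrite /= ?addr0 ?add0r.
have XW1 : forall m, (X *m W1) i m = (m == n0)%:R * (X i V1 - X i V0 + 4 * Omega * X i C - 2 * Omega)
   + (m == n1)%:R * (X i V0 - 2 * Omega * X i C - X i E)
   - (m == n2)%:R * (X i V0 - 2 * Omega * X i C - X i E).
  move=> m; rewrite mxE.
  under eq_bigr => k _ do rewrite mxE.
  rewrite /a0 /aL !(S1 (X i), S5 (X i), S3 (X i), S4 (X i)).
  by rewrite e1 mulr1.
rewrite [(_ *m W4 + X) i j]mxE [(_ *m W4) i j]mxE.
under eq_bigr => k _ do rewrite [W4 k j]mxE.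
rewrite !(S1 (relu_mx (X *m W1) i), S5 (relu_mx (X *m W1) i), S3 (relu_mx (X *m W1) i), S4 (relu_mx (X *m W1) i)).
rewrite !reluE !XW1 /=.
rewrite !mul1r !mul0r ?add0r ?addr0 ?subr0 ?sub0r.
case: eqP => [->|_]; last by rewrite mul0r add0r.
have rs : forall a x : R, a + Num.max x 0 - Num.max (- x) 0 = a + x.
  by move=> a x; rewrite -addrA relu_split.
rewrite mul1r rs.
move: (hV0 i) (hV1 i) => /andP[h1 h2] /andP[h3 h4].
case: (hC i) => hc; rewrite hc.
- have -> : ((0:R) == 1) = false by rewrite eq_sym oner_eq0.
  have -> : Num.max (X i V1 - X i V0 + 4 * Omega * 0 - 2 * Omega) 0 = 0.
    by apply/max_idPr; lra.
  lra.
- rewrite eqxx.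
  have -> : Num.max (X i V1 - X i V0 + 4 * Omega * 1 - 2 * Omega) 0
     = X i V1 - X i V0 + 4 * Omega * 1 - 2 * Omega.
    by apply/max_idPl; lra.
  lra.
Qed.
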